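(* Let $n\ge3$, let $S=(s_{ij})$ be an $n\times n$ magic square, and let $P=\{(x_{ij},y_{ij},z_{ij})\}$ with $x_{ij}=j-\frac{n-1}{2}$, $y_{ij}=\frac{n-1}{2}-i$, $z_{ij}=s_{ij}-\frac{n^2+1}{2}$. For $\epsilon=(\epsilon_{ij})\in\mathbb R^{n\times n}$ let $\tilde P$ be obtained by replacing $z_{ij}$ with $\tilde z_{ij}=z_{ij}+\epsilon_{ij}$, and set $\Phi(\tilde P)=\mathrm{Cov}(X,\tilde Z)^2+\mathrm{Cov}(Y,\tilde Z)^2$. Then $\Phi(P)=0$, and for generic perturbations $\epsilon$ (i.e. for all $\epsilon$ outside a Lebesgue-null subset of $\mathbb R^{n\times n}$), $\Phi(\tilde P)>0$.
   Context: A magic square of order $n$ is an arrangement of $1,\dots,n^2$ (each once) in an $n\times n$ grid with every row, column, and both main diagonals summing to $n(n^2+1)/2$. $X,Y,\tilde Z$ are the functions $(i,j)\mapsto x_{ij},y_{ij},\tilde z_{ij}$ regarded as random variables under the uniform distribution on cells, with $\mathrm{Cov}(F,G)=\frac1{n^2}\sum_{i,j}(F(i,j)-\bar F)(G(i,j)-\bar G)$. *)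

(* Defs.v *)
From mathcomp Require Import all_boot all_order all_algebra.
From mathcomp Require Import reals.
Set Implicit Arguments. Unset Strict Implicit. Unset Printing Implicit Defensive.
Import Order.TTheory GRing.Theory Num.Theory.
Local Open Scope ring_scope.

(* A magic square of order n: the entries (i,j) ↦ s i j (0-based indices)
   are exactly 1..n^2, each once (injective with values in [1, n^2], n^2 cells),
   and every row, column and both main diagonals sum to n(n^2+1)/2. *)
Definition is_magic_square (n : nat) (s : 'I_n -> 'I_n -> nat) : Prop :=
  [/\ (forall i j, (1 <= s i j <= n ^ 2)%N),
      (forall i j i' j', s i j = s i' j' -> i = i' /\ j = j')
    & [/\ (forall i, (\sum_(j < n) s i j = (n * (n ^ 2 + 1)) %/ 2)%N),
      (forall j, (\sum_(i < n) s i j = (n * (n ^ 2 + 1)) %/ 2)%N),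
      (\sum_(i < n) s i i = (n * (n ^ 2 + 1)) %/ 2)%N
    & (\sum_(i < n) s i (rev_ord i) = (n * (n ^ 2 + 1)) %/ 2)%N]].

Section Pts.
Variable R : realType.
Variable n : nat.

Definition xc (i j : 'I_n) : R := (j%:R) - (n%:R - 1) / 2.
Definition yc (i j : 'I_n) : R := (n%:R - 1) / 2 - i%:R.
Definition zc (s : 'I_n -> 'I_n -> nat) (i j : 'I_n) : R :=
  (s i j)%:R - ((n ^ 2)%:R + 1) / 2.

Definition mean (F : 'I_n -> 'I_n -> R) : R :=
  (n%:R ^+ 2)^-1 * \sum_(i < n) \sum_(j < n) F i j.
Definition cov (F G : 'I_n -> 'I_n -> R) : R :=
  (n%:R ^+ 2)^-1 *
    \sum_(i < n) \sum_(j < n) (F i j - mean F) * (G i j - mean G).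

Definition zpert (s : 'I_n -> 'I_n -> nat) (eps : 'M[R]_n) (i j : 'I_n) : R :=
  zc s i j + eps i j.
Definition Phi (s : 'I_n -> 'I_n -> nat) (eps : 'M[R]_n) : R :=
  cov xc (zpert s eps) ^+ 2 + cov yc (zpert s eps) ^+ 2.

Definition box_vol (a b : 'M[R]_n) : R := \prod_(i < n) \prod_(j < n) (b i j - a i j).
Definition in_box (a b x : 'M[R]_n) : Prop :=
  forall i j, a i j <= x i j <= b i j.
Definition lebesgue_null (A : 'M[R]_n -> Prop) : Prop :=
  forall e : R, 0 < e ->
    exists a b : nat -> 'M[R]_n,
      [/\ (forall k i j, a k i j <= b k i j),
          (forall x, A x -> exists k, in_box (a k) (b k) x)
        & (forall N, \sum_(k < N) box_vol (a k) (b k) <= e)].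
End Pts.

(* Main.v *)
Require Import Defs.
From mathcomp Require Import all_boot all_order all_algebra.
From mathcomp Require Import reals.
From mathcomp.algebra_tactics Require Import ring lra.
From mathcomp Require Import zify.
From Stdlib Require Import ClassicalEpsilon.
Import Order.TTheory GRing.Theory Num.Theory.
Local Open Scope ring_scope.

Section Gen.
Variable R : realType.
Variable n : nat.
Hypothesis n_gt0 : (0 < n)%N.

Lemma vol0 : box_vol (0 : 'M[R]_n) 0 = 0.
Proof.
rewrite /box_vol; case: n n_gt0 => // m _.
by rewrite big_ord_recl big_ord_recl !mxE subrr !mul0r.
Qed.

Lemma vol_ge0 (a b : 'M[R]_n) : (forall i j, a i j <= b i j) -> 0 <= box_vol a b.
Proof.
move=> H; apply: prodr_ge0 => i _; apply: prodr_ge0 => j _.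
by rewrite subr_ge0.
Qed.

Lemma fin_null (A : 'M[R]_n -> Prop) (T : finType) (fa fb : T -> 'M[R]_n) (e : R) :
  (forall t i j, fa t i j <= fb t i j) ->
  (forall x, A x -> exists t, in_box (fa t) (fb t) x) ->
  \sum_t box_vol (fa t) (fb t) <= e ->
  exists a b : nat -> 'M[R]_n,
      [/\ (forall k i j, a k i j <= b k i j),
          (forall x, A x -> exists k, in_box (a k) (b k) x)
        & (forall N, \sum_(k < N) box_vol (a k) (b k) <= e)].
Proof.
move=> Hab Hcov Hsum.
case: (pickP T) => [t0 _ | T0]; last first.
  exists (fun _ => 0), (fun _ => 0); split.
  - by move=> k i j; rewrite mxE.
  - by move=> x /Hcov [t]; have := T0 t.
  - move=> N; rewrite big1 ?vol0 //.
    by apply: le_trans Hsum; rewrite big_pred0.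
pose g (k : nat) := nth t0 (enum T) k.
exists (fun k => if (k < #|T|)%N then fa (g k) else 0).
exists (fun k => if (k < #|T|)%N then fb (g k) else 0).
split.
- by move=> k i j; case: ifP => _; [exact: Hab | rewrite mxE].
- move=> x /Hcov [t Ht]; exists (index t (enum T)).
  have -> : (index t (enum T) < #|T|)%N by rewrite cardE index_mem mem_enum.
  by rewrite /g nth_index ?mem_enum.
- move=> N; apply: le_trans Hsum.
  pose F k := box_vol (if (k < #|T|)%N then fa (g k) else 0)
                      (if (k < #|T|)%N then fb (g k) else 0).
  have F0 : forall k, 0 <= F k.
    move=> k; apply: vol_ge0 => i j; rewrite /F; case: ifP => _; [exact: Hab | by rewrite mxE].
  rewrite -/(\sum_(k < N) F k).
  apply: (@le_trans _ _ (\sum_(k < N + #|T|) F k)).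
    rewrite -!(big_mkord xpredT) (big_cat_nat _ (leq_addr _ _)) //=.
    by rewrite lerDl sumr_ge0.
  rewrite -(big_mkord xpredT) (big_cat_nat _ (leq_addl _ _)) //=.
  rewrite [X in _ + X]big_nat_cond [X in _ + X]big1 ?addr0; last first.
    by move=> k /andP[/andP[Hk _] _]; rewrite /F ltnNge Hk /= vol0.
  rewrite -(big_enum _ _ T).
  rewrite (big_nth t0) -cardE big_nat_cond [X in _ <= X]big_nat_cond.
  rewrite le_eqVlt; apply/orP; left; apply/eqP/eq_bigr => k /andP[/andP[_ Hk] _].
  by rewrite /F Hk.
Qed.
End Gen.

Definition lk (k : nat) := logn 2 k.+1.
Definition rk (k : nat) := (k.+1 %/ 2 ^ lk k)./2.

Lemma decomp k : k.+1 = (2 ^ lk k * (rk k).*2.+1)%N.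
Proof.
have [m cm Hm] := pfactor_coprime (p:=2) (n:=k.+1) isT isT.
rewrite /rk /lk; set l := logn 2 k.+1 in Hm *.
rewrite {2}Hm mulnK ?expn_gt0 //.
have om : odd m by rewrite -coprime2n.
rewrite {1}Hm mulnC; congr (_ * _)%N.
by rewrite -{1}(odd_double_half m) om.
Qed.

Lemma decomp_inv l r : lk (2 ^ l * r.*2.+1).-1 = l /\ rk (2 ^ l * r.*2.+1).-1 = r.
Proof.
have hp : (0 < 2 ^ l * r.*2.+1)%N by rewrite muln_gt0 expn_gt0.
have hl : lk (2 ^ l * r.*2.+1).-1 = l.
  rewrite /lk prednK // lognM ?expn_gt0 // pfactorK // logn_coprime ?addn0 //.
  by rewrite coprime2n /= odd_double.
split=> //; rewrite /rk hl prednK // mulKn ?expn_gt0 //.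
by rewrite -add1n (half_bit_double r true).
Qed.

Lemma lk_lt k : (lk k <= k)%N.
Proof. by rewrite /lk -ltnS ltn_logl. Qed.

Lemma rk_lt k : (rk k <= k)%N.
Proof.
rewrite /rk; apply: (@leq_trans (k.+1)./2); first by apply: half_leq; apply: leq_div.
have := odd_double_half k.+1; rewrite -muln2.
case: (odd k.+1) => /=; lia.
Qed.

Section Gen2.
Variable R : realType.
Variable n : nat.
Hypothesis n_gt0 : (0 < n)%N.

Lemma geom (e : R) N : \sum_(l < N) e / 2 ^+ l.+1 = e - e / 2 ^+ N.
Proof.
elim: N => [|N IH]; first by rewrite big_ord0 expr0 divr1 subrr.
rewrite big_ord_recr /= IH !exprS.
have h : (2 : R) ^+ N != 0 by apply: expf_neq0; rewrite pnatr_eq0.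
by field.
Qed.

Lemma count_null (A : 'M[R]_n -> Prop) (B : nat -> 'M[R]_n -> Prop) :
  (forall l, lebesgue_null (B l)) -> (forall x, A x -> exists l, B l x) ->
  lebesgue_null A.
Proof.
move=> HB HA e e0.
have el0 : forall l : nat, 0 < e / 2 ^+ l.+1.
  by move=> l; rewrite divr_gt0 // exprn_gt0.
have H : forall l, {ab : (nat -> 'M[R]_n) * (nat -> 'M[R]_n) |
   [/\ (forall k i j, ab.1 k i j <= ab.2 k i j),
       (forall x, B l x -> exists k, in_box (ab.1 k) (ab.2 k) x)
     & (forall N, \sum_(k < N) box_vol (ab.1 k) (ab.2 k) <= e / 2 ^+ l.+1)]}.
  move=> l; apply: constructive_indefinite_description.
  by have [a [b Hab]] := HB l _ (el0 l); exists (a, b).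
pose a l := (sval (H l)).1; pose b l := (sval (H l)).2.
have Hab : forall l k i j, a l k i j <= b l k i j.
  by move=> l k i j; case: (svalP (H l)) => h _ _; apply: h.
exists (fun k => a (lk k) (rk k)), (fun k => b (lk k) (rk k)); split.
- by move=> k i j; apply: Hab.
- move=> x /HA [l Bl]; case: (svalP (H l)) => _ hc _.
  have [r hr] := hc x Bl; exists (2 ^ l * r.*2.+1).-1.
  by have [-> ->] := decomp_inv l r; exact: hr.
- move=> N; pose V l r := box_vol (a l r) (b l r).
  have V0 : forall l r, 0 <= V l r by move=> l r; apply: vol_ge0 => i j; apply: Hab.
  have Vs : forall l M, \sum_(r < M) V l r <= e / 2 ^+ l.+1.
    by move=> l M; case: (svalP (H l)) => _ _ hs; apply: hs.
  pose phi (k : 'I_N) : 'I_N * 'I_N :=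
    (Ordinal (leq_ltn_trans (lk_lt k) (ltn_ord k)),
     Ordinal (leq_ltn_trans (rk_lt k) (ltn_ord k))).
  have phi_inj : injective phi.
    move=> k1 k2 [h1 h2]; apply: val_inj => /=.
    by apply: succn_inj; rewrite decomp h1 h2 -decomp.
  apply: (@le_trans _ _ (\sum_(l < N) \sum_(r < N) V l r)).
    rewrite pair_big /=.
    have -> : \sum_(k < N) V (lk k) (rk k) = \sum_(k in [set: 'I_N]) (fun p : 'I_N * 'I_N => V p.1 p.2) (phi k).
      by apply: eq_bigl => k; rewrite in_setT.
    rewrite -(big_imset (fun p : 'I_N * 'I_N => V p.1 p.2)) /=; last by move=> k1 k2 _ _; apply: phi_inj.
    rewrite [X in _ <= X](bigID (mem (phi @: [set: 'I_N]))) /=.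
    rewrite lerDl sumr_ge0 // => p _; exact: V0.
  apply: (@le_trans _ _ (\sum_(l < N) e / 2 ^+ l.+1)).
    by apply: ler_sum => l _; apply: Vs.
  rewrite geom lerBlDr lerDl divr_ge0 ?exprn_ge0 //; exact: ltW.
Qed.
End Gen2.
Lemma coord (R : realType) (K' : nat) (y : R) : 0 <= y <= K'.+1%:R ->
  (minn (Num.Def.truncn y) K')%:R <= y <= (minn (Num.Def.truncn y) K').+1%:R.
Proof.
move=> /andP[y0 yK]; have /andP[t1 t2] := truncn_itv y0.
case: (leqP (Num.Def.truncn y) K') => H.
  by rewrite t1 ltW.

have : K'.+1%:R <= (Num.Def.truncn y)%:R :> R by rewrite ler_nat.
move=> h; rewrite yK andbT.
apply: le_trans t1; apply: le_trans h.
by rewrite ler_nat.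
Qed.

Section Lev.
Variable R : realType.
Variable n : nat.
Hypothesis n_gt0 : (0 < n)%N.
Variable p : 'I_n * 'I_n.
Variable w : 'M[R]_n.
Hypothesis wp : w p.1 p.2 = 0.
Variable d0 : R.

Definition Lf (x : 'M[R]_n) := d0 + \sum_i \sum_j w i j * x i j.

Definition Cw := \sum_i \sum_j `|w i j|.

Lemma Cw_ge0 : 0 <= Cw.
Proof. by apply: sumr_ge0 => i _; apply: sumr_ge0 => j _. Qed.

Lemma Lf_lip (x y : 'M[R]_n) (h : R) : 0 <= h ->
  (forall i j, (i, j) != p -> `|x i j - y i j| <= h) ->
  `|Lf x - Lf y| <= Cw * h.
Proof.
move=> h0 H.
have -> : Lf x - Lf y = \sum_i \sum_j w i j * (x i j - y i j).
  rewrite /Lf opprD addrACA subrr add0r -sumrB; apply: eq_bigr => i _.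
  by rewrite -sumrB; apply: eq_bigr => j _; rewrite mulrBr.
rewrite /Cw mulr_suml; apply: (le_trans (ler_norm_sum _ _ _)).
apply: ler_sum => i _; rewrite mulr_suml.
apply: (le_trans (ler_norm_sum _ _ _)); apply: ler_sum => j _.
rewrite normrM; case: (eqVneq (i, j) p) => [E|ne].
  by have := wp; rewrite -E /= => ->; rewrite normr0 !mul0r.
by apply: ler_wpM2l => //; apply: H.
Qed.

Lemma level_null (l : nat) :
  lebesgue_null (fun x : 'M[R]_n => x p.1 p.2 = Lf x /\ forall i j, `|x i j| <= l.+1%:R).
Proof.
move=> e e0.
set Rr : R := l.+1%:R.
have Rr0 : 0 < Rr by rewrite ltr0n.
have C0 := Cw_ge0.
set D : R := 1 + 2 * Cw.
have D0 : 0 < D by rewrite /D; lra.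
set NN := (n * n)%N.
set K' := Num.Def.truncn ((2 * Rr * D) ^+ NN / e).
set K := K'.+1.
have K0 : 0 < K%:R :> R by rewrite ltr0n.
set h : R := 2 * Rr / K%:R.
have h0 : 0 < h by rewrite /h divr_gt0 // mulr_gt0.
have Ch : 0 <= Cw * h by rewrite mulr_ge0 // ltW.
pose S := {q : 'I_n * 'I_n | q != p}.
pose T := {ffun S -> 'I_K}.
pose idx (t : T) (i j : 'I_n) : nat :=
  match (insub (i, j) : option S) with Some s => nat_of_ord (t s) | None => 0%N end.
pose um (t : T) : 'M[R]_n := \matrix_(i, j) (- Rr + (idx t i j)%:R * h).
pose fa (t : T) : 'M[R]_n :=
  \matrix_(i, j) (if (i, j) == p then Lf (um t) - Cw * h else um t i j).
pose fb (t : T) : 'M[R]_n :=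
  \matrix_(i, j) (if (i, j) == p then Lf (um t) + Cw * h else um t i j + h).
apply: (@fin_null R n n_gt0 _ T fa fb).
- by move=> t i j; rewrite !mxE; case: ifP => _; lra.
- move=> x [xp xb].
  pose t : T := [ffun s => inord (minn (Num.Def.truncn ((x (val s).1 (val s).2 + Rr) / h)) K')].
  exists t.
  have key : forall i j, (i, j) != p -> um t i j <= x i j <= um t i j + h.
    move=> i j ne; rewrite mxE /idx; case: insubP => [s _ sv | ]; last by rewrite ne.
    rewrite ffunE /=.
 rewrite inordK; last by rewrite ltnS geq_minr.
    rewrite sv /=; set y := (x i j + Rr) / h.
    have xe : x i j = - Rr + y * h by rewrite /y divfK ?gt_eqF //; ring.
    have : 0 <= y <= K'.+1%:R.
      have := xb i j; rewrite ler_norml => /andP[b1 b2].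
      rewrite /y divr_ge0 ?ler_pdivrMr //=; last 2 first.
      - lra.
      - exact: ltW.
      rewrite /h mulrCA divff ?gt_eqF // mulr1; lra.
    move/coord => /andP[m1 m2]; rewrite xe; nra.
  move=> i j; rewrite !mxE; case: eqP => [E | /eqP ne]; last by have := key i j ne; rewrite mxE.
  have : `|Lf x - Lf (um t)| <= Cw * h.
    apply: Lf_lip; first exact: ltW.
    move=> i' j' ne'; have /andP[k1 k2] := key i' j' ne'; rewrite ger0_norm; lra.
  have -> : x i j = x p.1 p.2 by rewrite -E.
  by rewrite ler_distl -xp.
- apply: (@le_trans _ _ (\sum_(t : T) (D * h) ^+ NN)).
    apply: ler_sum => t _; rewrite /box_vol.
    have -> : (D * h) ^+ NN = \prod_(i < n) \prod_(j < n) (D * h).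
      by rewrite /NN exprM !prodr_const !card_ord.
    apply: ler_prod => i _; apply/andP; split.
      apply: prodr_ge0 => j _; rewrite !mxE; case: ifP => _; lra.
    apply: ler_prod => j _; rewrite !mxE; case: ifP => _; rewrite /D; nra.
  rewrite sumr_const card_ffun card_ord card_sig cardC1 card_prod !card_ord.
  have NNe : NN = (n * n).-1.+1 by rewrite prednK // muln_gt0 n_gt0.
  rewrite -mulr_natr natrX -/NN NNe.
  set M := (n * n).-1.
  have -> : (D * h) ^+ M.+1 * K%:R ^+ M = (2 * Rr * D) ^+ M.+1 / K%:R.
    have Kn : K%:R != 0 :> R by rewrite gt_eqF.
    have KM : K%:R ^+ M != 0 :> R by rewrite expf_neq0.
    have -> : D * h = (2 * Rr * D) / K%:R by rewrite /h; field.
    have gen : forall Y a b : R, a != 0 -> b != 0 -> Y / (a * b) * a = Y / b.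
      by move=> Y a b an bn; field; rewrite an bn.
    by rewrite expr_div_n [K%:R ^+ M.+1]exprSr gen.
  rewrite ler_pdivrMr // -ler_pdivrMl // mulrC.
  apply: ltW; rewrite -NNe; exact: truncnS_gt.
Qed.

Lemma graph_null : lebesgue_null (fun x : 'M[R]_n => x p.1 p.2 = Lf x).
Proof.
apply: (@count_null R n _ (fun l x => x p.1 p.2 = Lf x /\ forall i j, `|x i j| <= l.+1%:R)).
  exact: level_null.
move=> x xp; exists (Num.Def.truncn (\sum_i \sum_j `|x i j|)); split=> // i j.
set S := \sum_i \sum_j `|x i j|.
have S0 : 0 <= S by apply: sumr_ge0 => i' _; apply: sumr_ge0.
apply: (@le_trans _ _ S); last exact: ltW (truncnS_gt S).
apply: (@le_trans _ _ (\sum_j `|x i j|)).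
  by rewrite (bigD1 j) //= lerDl sumr_ge0.
rewrite /S [X in _ <= X](bigD1 i) //= lerDl sumr_ge0 // => i' _; exact: sumr_ge0.
Qed.

End Lev.
Lemma null_sub (R : realType) n (A B : 'M[R]_n -> Prop) :
  (forall x, A x -> B x) -> lebesgue_null B -> lebesgue_null A.
Proof.
move=> AB HB e e0; have [a [b [h1 h2 h3]]] := HB e e0.
by exists a, b; split=> // x /AB /h2.
Qed.

Lemma sum_pair (R : realType) n (F : 'I_n -> 'I_n -> R) :
  \sum_i \sum_j F i j = \sum_(q : 'I_n * 'I_n) F q.1 q.2.
Proof. by rewrite pair_big. Qed.

Lemma hyper_null (R : realType) n (c : 'I_n -> 'I_n -> R) (p : 'I_n * 'I_n) (d : R) :
  (0 < n)%N -> c p.1 p.2 != 0 ->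
  lebesgue_null (fun eps : 'M[R]_n => \sum_i \sum_j c i j * eps i j = d).
Proof.
move=> n0 cp.
pose w : 'M[R]_n := \matrix_(i, j) (if (i, j) == p then 0 else - c i j / c p.1 p.2).
have wp : w p.1 p.2 = 0 by rewrite mxE -surjective_pairing eqxx.
apply: (@null_sub R n _ _ _ (@graph_null R n n0 p w wp (d / c p.1 p.2))).
move=> x H; rewrite /Lf -H !sum_pair.
rewrite [\sum_q c _ _ * _](bigD1 p) // [\sum_q w _ _ * _](bigD1 p) //=.
rewrite wp mul0r add0r.
have -> : \sum_(q | q != p) w q.1 q.2 * x q.1 q.2 =
          - (\sum_(q | q != p) c q.1 q.2 * x q.1 q.2) / c p.1 p.2.
  rewrite mulNr mulr_suml -sumrN; apply: eq_bigr => q qp.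
  by rewrite mxE -surjective_pairing (negbTE qp); field.
by field.
Qed.

Section Main.
Variable R : realType.
Variable n : nat.
Hypothesis n_gt0 : (0 < n)%N.

Lemma nR0 : (n%:R ^+ 2 : R) != 0.
Proof. by rewrite expf_neq0 // pnatr_eq0 -lt0n. Qed.

Lemma sum_center (F : 'I_n -> 'I_n -> R) :
  \sum_i \sum_j (F i j - mean F) = 0.
Proof.
rewrite (eq_bigr (fun i => \sum_j F i j - mean F *+ n)); last first.
  by move=> i _; rewrite sumrB sumr_const card_ord.
rewrite sumrB sumr_const card_ord -mulrnA -mulr_natr natrM /mean.
have h : (n%:R : R) != 0 by rewrite pnatr_eq0 -lt0n.
by field.
Qed.

Lemma cov_alt (F G : 'I_n -> 'I_n -> R) :
  cov F G = (n%:R ^+ 2)^-1 * \sum_i \sum_j (F i j - mean F) * G i j.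
Proof.
rewrite /cov; congr (_ * _).
have -> : \sum_i \sum_j (F i j - mean F) * (G i j - mean G) =
  \sum_i \sum_j (F i j - mean F) * G i j - (\sum_i \sum_j (F i j - mean F)) * mean G.
  rewrite mulr_suml -sumrB; apply: eq_bigr => i _.
  by rewrite mulr_suml -sumrB; apply: eq_bigr => j _; rewrite mulrBr.
by rewrite sum_center mul0r subr0.
Qed.
Variable s : 'I_n -> 'I_n -> nat.
Hypothesis rows : forall i, (\sum_(j < n) s i j = (n * (n ^ 2 + 1)) %/ 2)%N.
Hypothesis cols : forall j, (\sum_(i < n) s i j = (n * (n ^ 2 + 1)) %/ 2)%N.

Lemma half_eq : (((n * (n ^ 2 + 1)) %/ 2)%N%:R : R) = n%:R * ((n ^ 2)%:R + 1) / 2.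
Proof.
have d2 : (2 %| n * (n ^ 2 + 1))%N.
  by rewrite dvdn2 oddM oddD oddX /=; case: (odd n).
have := divnK d2 => /(congr1 (fun m => m%:R : R)).
rewrite natrM natrM natrD /= => E.
by rewrite -E; field.
Qed.

Lemma zc_col j : \sum_i (@zc R n s) i j = 0 :> R.
Proof.
rewrite /zc sumrB -natr_sum cols half_eq sumr_const card_ord -mulr_natr.
by ring.
Qed.

Lemma zc_row i : \sum_j (@zc R n s) i j = 0 :> R.
Proof.
rewrite /zc sumrB -natr_sum rows half_eq sumr_const card_ord -mulr_natr.
by ring.
Qed.

Lemma cov_x : cov (@xc R n) (@zc R n s) = 0.
Proof.
rewrite cov_alt exchange_big /= big1 ?mulr0 // => j _.
rewrite (eq_bigr (fun i => (j%:R - (n%:R - 1) / 2 - mean (@xc R n)) * (@zc R n s) i j)) //.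
by rewrite -mulr_sumr zc_col mulr0.
Qed.

Lemma cov_y : cov (@yc R n) (@zc R n s) = 0.
Proof.
rewrite cov_alt big1 ?mulr0 // => i _.
rewrite (eq_bigr (fun j => ((n%:R - 1) / 2 - i%:R - mean (@yc R n)) * (@zc R n s) i j)) //.
by rewrite -mulr_sumr zc_row mulr0.
Qed.
End Main.

Theorem mainTheorem6 (R : realType) (n : nat) (s : 'I_n -> 'I_n -> nat) :
  (3 <= n)%N -> is_magic_square s ->
  Phi s (0 : 'M[R]_n) = 0 /\
  lebesgue_null (fun eps : 'M[R]_n => ~ (0 < Phi s eps)).
Proof.
move=> n3 [_ _ [rows cols _ _]].
have n0 : (0 < n)%N by apply: leq_trans n3.
have Hz : forall (eps : 'M[R]_n) F, cov F (zpert s eps) =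
    cov F (zc R s) + n%:R ^- 2 * \sum_i \sum_j (F i j - mean F) * eps i j.
  move=> eps F; rewrite !(@cov_alt R n n0) -mulrDr; congr (_ * _).
  rewrite -big_split; apply: eq_bigr => i _; rewrite -big_split.
  by apply: eq_bigr => j _; rewrite /zpert mulrDr.
split.
  rewrite /Phi !Hz (@cov_x R n n0 s cols) (@cov_y R n n0 s rows).
  rewrite !big1 ?mulr0 ?add0r ?expr0n //= ?addr0 // => i _;
    by rewrite big1 // => j _; rewrite mxE mulr0.
pose c := fun i j : 'I_n => @xc R n i j - mean (@xc R n).
have [p cp] : exists p : 'I_n * 'I_n, c p.1 p.2 != 0.
  pose i0 : 'I_n := Ordinal n0.
  have n1 : (1 < n)%N by apply: leq_trans n3.
  pose i1 : 'I_n := Ordinal n1.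
  case: (eqVneq (c i0 i0) 0) => h; last by exists (i0, i0).
  exists (i0, i1) => /=.
  have : c i0 i1 - c i0 i0 = 1 by rewrite /c /xc /=; ring.
  by rewrite h subr0 => ->; rewrite oner_eq0.
apply: (@null_sub R n _ _ _
  (@hyper_null R n c p (- (\sum_i \sum_j c i j * @zc R n s i j)) n0 cp)).
move=> eps H.
have a0 : cov (@xc R n) (zpert s eps) = 0.
  move/negP: H; rewrite -leNgt /Phi => H.
  have : cov (@xc R n) (zpert s eps) ^+ 2 <= 0.
    have := sqr_ge0 (cov (@yc R n) (zpert s eps)); lra.
  by move=> h; apply/eqP; rewrite -sqrf_eq0 eq_le h sqr_ge0.
move: a0; rewrite Hz (@cov_x R n n0 s cols) add0r => /eqP.
rewrite mulf_eq0 invr_eq0 (negbTE (@nR0 R n n0)) /= => /eqP.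
move=> h2.
have hz : \sum_i \sum_j c i j * @zc R n s i j = 0.
  have := @cov_x R n n0 s cols; rewrite (@cov_alt R n n0) => /eqP.
  by rewrite mulf_eq0 invr_eq0 (negbTE (@nR0 R n n0)) /= => /eqP.
by rewrite hz oppr0; exact: h2.
Qed.
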